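(* Let $\mathbb{X}$ be a Banach space and $\delta>0$. Suppose $V\subset\mathbb{X}$ is a $\delta$-separated set with $\#V\geq2$ and there exist a line $L$ and a number $0\leq\alpha<1/6$ with $\mathrm{dist}(v,L)\leq\alpha\delta$ for all $v\in V$. Let $\pi$ be a metric projection onto $L$, identify $L$ with $\mathbb{R}$ via an affine isometry, and enumerate $V=\{v_1,\dots,v_n\}$ so that $\pi(v_1)<\pi(v_2)<\dots<\pi(v_n)$. Then $$\sum_{i=1}^{n-1}|v_{i+1}-v_i|^s\leq(1+3\alpha)^{2s}|v_1-v_n|^s\quad\text{for all }s\in[1,\infty).$$
   Context: All Banach spaces are real; a line is a one-dimensional affine subspace. $V$ is $\delta$-separated if $|v-w|\geq\delta$ for all distinct $v,w\in V$. A metric projection onto $L$ is any map $\pi:\mathbb{X}\to L$ with $|x-\pi(x)|=\mathrm{dist}(x,L)$ for all $x$. (Under these hypotheses the points $\pi(v)$, $v\in V$, are distinct.) *)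

(* Defs.v *)
From Stdlib Require Import Reals List.
Open Scope R_scope.

Record Banach := {
  carrier :> Type;
  vadd : carrier -> carrier -> carrier;
  vscal : R -> carrier -> carrier;
  vzero : carrier;
  vopp : carrier -> carrier;
  vnorm : carrier -> R;
  vadd_assoc : forall x y z, vadd x (vadd y z) = vadd (vadd x y) z;
  vadd_comm : forall x y, vadd x y = vadd y x;
  vadd_zero : forall x, vadd x vzero = x;
  vadd_opp : forall x, vadd x (vopp x) = vzero;
  vscal_one : forall x, vscal 1 x = x;
  vscal_assoc : forall a b x, vscal a (vscal b x) = vscal (a * b) x;
  vscal_distr_v : forall a x y, vscal a (vadd x y) = vadd (vscal a x) (vscal a y);
  vscal_distr_s : forall a b x, vscal (a + b) x = vadd (vscal a x) (vscal b x);
  vnorm_eq0 : forall x, vnorm x = 0 -> x = vzero;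
  vnorm_scal : forall a x, vnorm (vscal a x) = Rabs a * vnorm x;
  vnorm_triangle : forall x y, vnorm (vadd x y) <= vnorm x + vnorm y;
  complete : forall u : nat -> carrier,
    (forall eps, eps > 0 -> exists N, forall m n, (m >= N)%nat -> (n >= N)%nat ->
        vnorm (vadd (u m) (vopp (u n))) < eps) ->
    exists l, forall eps, eps > 0 -> exists N, forall n, (n >= N)%nat ->
        vnorm (vadd (u n) (vopp l)) < eps
}.

Arguments vadd {_} _ _. Arguments vscal {_} _ _. Arguments vopp {_} _. Arguments vnorm {_} _.

Definition vsub {X : Banach} (x y : X) : X := vadd x (vopp y).

Definition vdist {X : Banach} (x y : X) : R := vnorm (vsub x y).

(** For [vnorm d = 1], [t |-> line_pt p d t] is an affine isometry R -> L,
    and every line L admits such a parametrisation. *)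
Definition line_pt {X : Banach} (p d : X) (t : R) : X := vadd p (vscal t d).

Definition is_dist_line {X : Banach} (p d x : X) (r : R) : Prop :=
  (forall t, r <= vdist x (line_pt p d t)) /\
  (forall r', (forall t, r' <= vdist x (line_pt p d t)) -> r' <= r).

Fixpoint chain_sum {X : Type} (f : X -> X -> R) (l : list X) : R :=
  match l with
  | a :: ((b :: _) as t) => f a b + chain_sum f t
  | _ => 0
  end.

(* Main.v *)
Require Import Defs.
From Stdlib Require Import Reals List Sorted Lra Lia.
Open Scope R_scope.

Section V.
Variable X : Banach.
Implicit Types x y z a b c e : X.

Lemma add0l x : vadd (vzero X) x = x.
Proof. rewrite vadd_comm; apply vadd_zero. Qed.

Lemma add_cancel x y z : vadd x y = vadd x z -> y = z.
Proof.
  intro H.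
  assert (E: forall w, vadd (vopp x) (vadd x w) = w).
  { intro w. rewrite vadd_assoc, (vadd_comm _ (vopp x) x), vadd_opp. apply add0l. }
  rewrite <- (E y), <- (E z), H; reflexivity.
Qed.

Lemma scal0 x : vscal 0 x = vzero X.
Proof.
  apply (add_cancel (vscal 0 x)). rewrite vadd_zero, <- vscal_distr_s.
  now replace (0+0) with 0 by ring.
Qed.

Lemma oppE x : vopp x = vscal (-1) x.
Proof.
  apply (add_cancel x). rewrite vadd_opp.
  rewrite <- (vscal_one _ x) at 1. rewrite <- vscal_distr_s.
  replace (1 + -1) with 0 by ring. now rewrite scal0.
Qed.

Lemma norm_opp x : vnorm (vopp x) = vnorm x.
Proof. rewrite oppE, vnorm_scal. replace (Rabs (-1)) with 1 by (rewrite Rabs_left; lra); ring. Qed.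

Lemma norm0 : vnorm (vzero X) = 0.
Proof. rewrite <- (scal0 (vzero X)), vnorm_scal, Rabs_R0; ring. Qed.

Lemma norm_nonneg x : 0 <= vnorm x.
Proof.
  pose proof (vnorm_triangle _ x (vopp x)) as H.
  rewrite vadd_opp, norm0, norm_opp in H. lra.
Qed.

Lemma swap4 a b c e : vadd (vadd a b) (vadd c e) = vadd (vadd a c) (vadd b e).
Proof.
  rewrite <- !vadd_assoc. f_equal. rewrite !vadd_assoc. f_equal. apply vadd_comm.
Qed.

Lemma opp_add x y : vopp (vadd x y) = vadd (vopp x) (vopp y).
Proof. rewrite !oppE. apply vscal_distr_v. Qed.

Lemma oppK x : vopp (vopp x) = x.
Proof. rewrite !oppE, vscal_assoc. replace (-1 * -1) with 1 by ring. apply vscal_one. Qed.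

Lemma bdist_sym x y : vdist x y = vdist y x.
Proof.
  unfold vdist, vsub. rewrite <- norm_opp, opp_add, oppK, vadd_comm. reflexivity.
Qed.

Lemma bdist_tri x y z : vdist x z <= vdist x y + vdist y z.
Proof.
  unfold vdist, vsub.
  replace (vadd x (vopp z)) with (vadd (vadd x (vopp y)) (vadd y (vopp z))).
  apply vnorm_triangle.
  rewrite <- (vadd_assoc _ x), (vadd_assoc _ (vopp y)), (vadd_comm _ (vopp y) y), vadd_opp, add0l.
  reflexivity.
Qed.

Lemma bdist_line (p d : X) s t : vnorm d = 1 -> vdist (line_pt p d s) (line_pt p d t) = Rabs (s - t).
Proof.
  intro Hd. unfold vdist, vsub, line_pt.
  rewrite opp_add, swap4, vadd_opp, add0l, (oppE (vscal t d)), vscal_assoc, <- vscal_distr_s.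
  rewrite vnorm_scal, Hd. rewrite Rmult_1_r. f_equal; ring.
Qed.

Lemma bdist_nonneg x y : 0 <= vdist x y.
Proof. apply norm_nonneg. Qed.

End V.

Lemma dist_exists (X : Banach) (p d x : X) : exists r, is_dist_line p d x r.
Proof.
  set (E := fun r => exists t, r = - vdist x (line_pt p d t)).
  assert (Hb : bound E).
  { exists 0. intros r [t ->]. pose proof (bdist_nonneg X x (line_pt p d t)). lra. }
  assert (Hn : exists r, E r) by (exists (- vdist x (line_pt p d 0)); exists 0; reflexivity).
  destruct (completeness E Hb Hn) as [m [Hub Hlub]].
  exists (- m). split.
  - intro t. assert (E (- vdist x (line_pt p d t))) by (exists t; reflexivity).
    specialize (Hub _ H). lra.
  - intros r' Hr'. assert (m <= - r'). { apply Hlub. intros r [t ->]. specialize (Hr' t). lra. }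
    lra.
Qed.

Lemma last_cons {X : Type} (w h : X) l : last (w :: l) h = last l w.
Proof.
  revert w h. induction l as [|u l IH]; intros w h; [reflexivity|].
  change (last (u :: l) h = last (u::l) w). rewrite !IH. reflexivity.
Qed.

Lemma chain_lin {X : Type} (q : X -> R) (g : X -> X -> R) dl c (l : list X) (h : X) :
  StronglySorted (fun v w => q v < q w) (h :: l) ->
  (forall a b, In a (h :: l) -> In b (h :: l) -> a <> b -> dl <= g a b <= Rabs (q b - q a) + c) ->
  chain_sum g (h :: l) <= q (last l h) - q h + c * INR (length l) /\
  INR (length l) * (dl - c) <= q (last l h) - q h.
Proof.
  revert h. induction l as [|w l IH]; intros h Hs Hg.
  - simpl. lra.
  - inversion Hs as [|? ? Hs' Hf]; subst.
    assert (Hhw : q h < q w) by (inversion Hf; assumption).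
    assert (Hne : h <> w) by (intro E; subst; lra).
    destruct (IH w Hs') as [I1 I2].
    { intros a b Ha Hb. apply Hg; right; assumption. }
    assert (G := Hg h w (or_introl eq_refl) (or_intror (or_introl eq_refl)) Hne).
    rewrite Rabs_right in G by lra.
    rewrite last_cons. change (length (w :: l)) with (S (length l)). rewrite S_INR.
    change (chain_sum g (h :: w :: l)) with (g h w + chain_sum g (w :: l)).
    split; nra.
Qed.

Lemma Rpower_pos x y : 0 < Rpower x y.
Proof. unfold Rpower. apply exp_pos. Qed.

Lemma superadd a b s : 0 < a -> 0 < b -> 1 <= s -> Rpower a s + Rpower b s <= Rpower (a + b) s.
Proof.
  intros Ha Hb Hs.
  assert (K : forall x, 0 < x -> Rpower x s = x * Rpower x (s - 1)).
  { intros x Hx. replace s with (1 + (s - 1)) at 1 by ring. rewrite Rpower_plus, Rpower_1 by lra. reflexivity. }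
  rewrite !K by lra.
  assert (Rpower a (s-1) <= Rpower (a+b) (s-1)) by (apply Rle_Rpower_l; lra).
  assert (Rpower b (s-1) <= Rpower (a+b) (s-1)) by (apply Rle_Rpower_l; lra).
  nra.
Qed.

Lemma chain_pow {X : Type} (q : X -> R) (g : X -> X -> R) s (l : list X) (h : X) :
  1 <= s -> l <> nil ->
  StronglySorted (fun v w => q v < q w) (h :: l) ->
  (forall a b, In a (h :: l) -> In b (h :: l) -> a <> b -> 0 < g a b) ->
  chain_sum (fun a b => Rpower (g a b) s) (h :: l) <= Rpower (chain_sum g (h :: l)) s /\
  0 < chain_sum g (h :: l).
Proof.
  intros Hs. revert h. induction l as [|w l IH]; intros h Hl Hss Hg; [congruence|].
  inversion Hss as [|? ? Hs' Hf]; subst.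
  assert (Hhw : q h < q w) by (inversion Hf; assumption).
  assert (Hne : h <> w) by (intro E; subst; lra).
  assert (G := Hg h w (or_introl eq_refl) (or_intror (or_introl eq_refl)) Hne).
  change (chain_sum g (h :: w :: l)) with (g h w + chain_sum g (w :: l)).
  change (chain_sum (fun a b => Rpower (g a b) s) (h :: w :: l)) with
    (Rpower (g h w) s + chain_sum (fun a b => Rpower (g a b) s) (w :: l)).
  destruct l as [|u l].
  - simpl. rewrite !Rplus_0_r. lra.
  - destruct (IH w ltac:(discriminate) Hs') as [I1 I2].
    { intros a b Ha Hb. apply Hg; right; assumption. }
    split; [|lra].
    pose proof (superadd _ _ s G I2 Hs). lra.
Qed.

Lemma arith (al dl m T A E : R) : 0 < dl -> 0 <= al < 1/6 -> 2 <= m ->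
  A <= T + 2 * (al * dl) * m -> m * (dl - 2 * (al * dl)) <= T -> T - 2 * (al * dl) <= E -> 0 <= A ->
  A <= (1 + 3 * al) ^ 2 * E.
Proof.
  intros Hd Ha Hm F1 F2 F3 HA.
  assert (h1 : (1 - 2*al) * (m * dl) <= T) by nra.
  assert (h2 : A * (1 - 2*al) <= T).
  { assert (A * (1-2*al) <= (T + 2*al*dl*m) * (1-2*al)) by (apply Rmult_le_compat_r; lra).
    assert (2*al*((1 - 2*al) * (m * dl)) <= 2*al*T) by (apply Rmult_le_compat_l; lra).
    nra. }
  assert (h3 : 2 * dl * (1 - 2*al) <= T).
  { assert (2*((1-2*al)*dl) <= m*((1-2*al)*dl)) by (apply Rmult_le_compat_r; nra). nra. }
  assert (h4 : E * (1 - 2*al) >= T * (1 - 3*al)).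
  { assert ((T - 2*al*dl) * (1-2*al) <= E * (1-2*al)) by (apply Rmult_le_compat_r; lra).
    assert (al * (2 * dl * (1 - 2*al)) <= al * T) by (apply Rmult_le_compat_l; lra).
    nra. }
  assert (h5 : A * (1 - 3*al) <= E).
  { assert (A * (1-2*al) * (1-3*al) <= T * (1-3*al)) by (apply Rmult_le_compat_r; lra).
    assert (A * (1-3*al) * (1-2*al) <= E * (1-2*al)) by nra.
    apply Rmult_le_reg_r with (1 - 2*al); lra. }
  assert (h6 : 1 <= (1 + 3*al)^2 * (1 - 3*al)) by nra.
  assert (A * 1 <= A * ((1 + 3*al)^2 * (1 - 3*al))) by (apply Rmult_le_compat_l; lra).
  assert (0 <= (1+3*al)^2) by nra.
  assert ((1+3*al)^2 * (A * (1 - 3*al)) <= (1+3*al)^2 * E) by (apply Rmult_le_compat_l; lra).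
  nra.
Qed.

Lemma in_last {Y : Type} (l : list Y) (d : Y) : In (last l d) (d :: l).
Proof.
  revert d. induction l as [|x l IH]; intro d; [simpl; auto|].
  rewrite last_cons. right. apply IH.
Qed.

Theorem mainTheorem11 (X : Banach) (delta alpha : R) (vs : list X)
  (p d : X) (pic : X -> R) :
  delta > 0 ->
  NoDup vs ->
  (2 <= length vs)%nat ->
  (forall v w, In v vs -> In w vs -> v <> w -> vdist v w >= delta) ->
  vnorm d = 1 ->
  0 <= alpha < 1 / 6 ->
  (forall v r, In v vs -> is_dist_line p d v r -> r <= alpha * delta) ->
  (forall x r, is_dist_line p d x r -> vdist x (line_pt p d (pic x)) = r) ->
  StronglySorted (fun v w => pic v < pic w) vs ->
  forall (v0 : X) (s : R), 1 <= s ->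
    chain_sum (fun a b => Rpower (vdist b a) s) vs
      <= Rpower (1 + 3 * alpha) (2 * s) * Rpower (vdist (hd v0 vs) (last vs v0)) s.
Proof.
  intros Hd Hnd Hlen Hsep Hdn Ha Hdl Hpi Hss v0 s Hs.
  assert (Hproj : forall v, In v vs -> vdist v (line_pt p d (pic v)) <= alpha * delta).
  { intros v Hv. destruct (dist_exists X p d v) as [r Hr]. rewrite (Hpi v r Hr). exact (Hdl v r Hv Hr). }
  assert (Hpair : forall a b, In a vs -> In b vs ->
     vdist b a <= Rabs (pic b - pic a) + 2 * (alpha * delta) /\
     Rabs (pic b - pic a) <= vdist b a + 2 * (alpha * delta)).
  { intros a b Ha' Hb'.
    pose proof (Hproj a Ha'). pose proof (Hproj b Hb').
    rewrite <- (bdist_line X p d (pic b) (pic a) Hdn).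
    pose proof (bdist_tri X b (line_pt p d (pic b)) a).
    pose proof (bdist_tri X (line_pt p d (pic b)) (line_pt p d (pic a)) a).
    pose proof (bdist_tri X (line_pt p d (pic b)) b (line_pt p d (pic a))).
    pose proof (bdist_tri X b a (line_pt p d (pic a))).
    rewrite (bdist_sym X (line_pt p d (pic a)) a) in *.
    rewrite (bdist_sym X (line_pt p d (pic b)) b) in *.
    split; lra. }
  destruct vs as [|h [|w t]]; simpl in Hlen; try lia.
  set (g := fun a b : X => vdist b a).
  destruct (chain_lin pic g delta (2 * (alpha * delta)) (w :: t) h Hss) as [L1 L2].
  { intros a b Ha' Hb' Hab. unfold g. split.
    - apply Rge_le, Hsep; auto.
    - apply Hpair; auto. }
  destruct (chain_pow pic g s (w :: t) h Hs ltac:(discriminate) Hss) as [P1 P2].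
  { intros a b Ha' Hb' Hab. unfold g. pose proof (Hsep b a Hb' Ha' (fun E => Hab (eq_sym E))). lra. }
  assert (Hlast : last (h :: w :: t) v0 = last (w :: t) h).
  { change (last (h :: w :: t) v0) with (last (w :: t) v0). rewrite !last_cons. reflexivity. }
  rewrite Hlast. simpl hd.
  assert (HK1 : 1 <= Rpower (1 + 3 * alpha) (2 * s)).
  { assert (H0 : Rpower (1 + 3*alpha) 0 <= Rpower (1 + 3 * alpha) (2 * s)) by (apply Rle_Rpower; lra).
    rewrite Rpower_O in H0 by lra. exact H0. }
  destruct t as [|u t].
  - simpl. rewrite Rplus_0_r. rewrite (bdist_sym X w h).
    pose proof (Rpower_pos (vdist h w) s). nra.
  - set (z := last (w :: u :: t) h) in *.
    assert (Hz : In z (h :: w :: u :: t)).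
    { unfold z. apply in_last. }
    destruct (Hpair h z (or_introl eq_refl) Hz) as [_ E2].
    rewrite (bdist_sym X z h) in E2.
    pose proof (Rle_abs (pic z - pic h)).
    change (length (w :: u :: t)) with (S (S (length t))) in L1, L2.
    rewrite !S_INR in L1, L2.
    pose proof (pos_INR (length t)).
    assert (HA : chain_sum g (h :: w :: u :: t) <= (1 + 3*alpha)^2 * vdist h z).
    { apply (arith alpha delta (INR (length t) + 1 + 1) (pic z - pic h)); lra. }
    assert (HE : 0 < vdist h z).
    { assert (0 <= (1 + 3*alpha)^2) by nra. nra. }
    eapply Rle_trans; [exact P1|].
    eapply Rle_trans; [apply Rle_Rpower_l; [lra| split; [exact P2| exact HA]]|].
    rewrite <- Rpower_mult_distr by nra.
    replace ((1 + 3 * alpha) ^ 2) with (Rpower (1 + 3*alpha) (INR 2)) by (apply Rpower_pow; lra).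
    rewrite Rpower_mult. simpl INR. replace (1 + 1) with 2 by ring. lra.
Qed.
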